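(* Let $T>0$, $\alpha>0$, $\beta>0$, $\sigma>0$, $u_1>0$, let $N$ be a positive integer and $R_0\in\mathbb R$, and let $\hat u$ be an optimal control for the problem $$\int_0^T\big(\alpha R(t)+\beta u(t)\big)\,dt\to\inf,\qquad \dot R(t)=-u(t)R(t)+N\sigma^2,\qquad R(0)=R_0,\qquad 0\le u(t)\le u_1 .$$ Then there exists $\varepsilon>0$ such that $\hat u(t)=0$ for all $t\in(T-\varepsilon,T)$.
   Context: Admissible controls are functions $u\in L^\infty[0,T]$ with $0\le u(t)\le u_1$ for a.e. $t$ (identified up to a.e. equality); the corresponding state $R$ is the absolutely continuous solution of $\dot R=-uR+N\sigma^2$, $R(0)=R_0$. An optimal control is an admissible control minimizing the integral functional. *)

(* Defs.v *)
From HB Require Import structures.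
From mathcomp Require Import all_boot all_order all_algebra.
From mathcomp Require Import all_classical all_reals all_analysis.
Set Implicit Arguments. Unset Strict Implicit. Unset Printing Implicit Defensive.
Import Order.TTheory GRing.Theory Num.Theory.
Import numFieldNormedType.Exports.
Local Open Scope classical_set_scope.
Local Open Scope ring_scope.

Definition admissible {R : realType} (T u1 : R) (u : R -> R) : Prop :=
  measurable_fun `[0, T] u /\
  {ae (@lebesgue_measure R), forall t, t \in `[0, T] -> 0 <= u t <= u1}.

(* x is the absolutely continuous solution on [0,T] of
   x' = - u x + N sigma^2, x(0) = R0, written in integral form
   (x continuous, so the integrand is Lebesgue integrable). *)
Definition is_state {R : realType} (T R0 : R) (N : nat) (sigma : R)
    (u x : R -> R) : Prop :=
  {within `[0, T], continuous x} /\
  forall t, 0 <= t <= T ->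
    x t = R0 + Rintegral (@lebesgue_measure R) `[0, t]
                 (fun s => - u s * x s + N%:R * sigma ^+ 2).

Definition cost {R : realType} (T alpha beta : R) (u x : R -> R) : R :=
  Rintegral (@lebesgue_measure R) `[0, T] (fun t => alpha * x t + beta * u t).

Definition optimal_control {R : realType} (T alpha beta sigma u1 R0 : R)
    (N : nat) (uhat : R -> R) : Prop :=
  admissible T u1 uhat /\
  exists xhat, is_state T R0 N sigma uhat xhat /\
    forall u x, admissible T u1 u -> is_state T R0 N sigma u x ->
      cost T alpha beta uhat xhat <= cost T alpha beta u x.

(* Main.v *)
Require Import Defs.
From HB Require Import structures.
From mathcomp Require Import all_boot all_order all_algebra.
From mathcomp Require Import all_classical all_reals all_analysis.
From mathcomp Require Import ring lra.
Import Order.TTheory GRing.Theory Num.Theory.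
Import numFieldNormedType.Exports.
Local Open Scope classical_set_scope.
Local Open Scope ring_scope.

Definition good {R : realType} (A : set R) (f : R -> R) :=
  measurable_fun A f /\ exists B : R, forall x, A x -> `|f x| <= B.

Lemma goodD (R : realType) (A : set R) f g : measurable A ->
  good A f -> good A g -> good A (fun t => f t + g t).
Proof.
move=> mA [mf [B1 h1]] [mg [B2 h2]]; split.
  exact: measurable_realfun.measurable_funD.
exists (B1 + B2) => x Ax; apply: le_trans (ler_normD _ _) _.
exact: lerD (h1 x Ax) (h2 x Ax).
Qed.

Lemma goodM (R : realType) (A : set R) f g : measurable A ->
  good A f -> good A g -> good A (fun t => f t * g t).
Proof.
move=> mA [mf [B1 h1]] [mg [B2 h2]]; split.
  exact: measurable_realfun.measurable_funM.
exists (B1 * B2) => x Ax; rewrite normrM.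
by apply: ler_pM => //; [exact: h1|exact: h2].
Qed.

Lemma goodN (R : realType) (A : set R) f : measurable A ->
  good A f -> good A (fun t => - f t).
Proof.
move=> mA [mf [B h]]; split; first exact: measurable_realfun.measurable_funN.
by exists B => x Ax; rewrite normrN; exact: h.
Qed.

Lemma goodC (R : realType) (A : set R) (k : R) : good A (fun=> k).
Proof. by split => //; exists `|k|. Qed.

Lemma good_int (R : realType) (A D : set R) f : measurable A ->
  (@lebesgue_measure R A < +oo)%E -> measurable D -> D `<=` A ->
  good A f -> (@lebesgue_measure R).-integrable D (EFin \o f).
Proof.
move=> mA Afin mD DA [mf [B h]].
have iA : (@lebesgue_measure R).-integrable A (EFin \o f).
  apply: measurable_bounded_integrable => //.
  exists B; split; first exact: num_real.
  by move=> M /ltW BM x Ax; exact: le_trans (h x Ax) BM.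
exact: (@integrableS _ _ _ (@lebesgue_measure R) A D (EFin \o f) mA mD DA iA).
Qed.

Lemma itv_fin (R : realType) (a b : R) (b0 b1 : bool) :
  (@lebesgue_measure R [set` Interval (BSide b0 a) (BSide b1 b)] < +oo)%E.
Proof.
rewrite lebesgue_measure_itv; case: ifP => _ //=; exact: ltry.
Qed.

Lemma itv_len (R : realType) (a b : R) : a < b ->
  fine (@lebesgue_measure R [set` `]a, b]]) = b - a.
Proof. by move=> ab; rewrite lebesgue_measure_itv /= lte_fin ab. Qed.

Lemma Rint_ae d (T : measurableType d) (R : realType)
  (mu : {measure set T -> \bar R}) (D : set T) (f g : T -> R) : measurable D ->
  measurable_fun D f -> measurable_fun D g ->
  {ae mu, forall t, D t -> f t = g t} ->
  Rintegral mu D f = Rintegral mu D g.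
Proof.
move=> mD mf mg H; rewrite /Rintegral; congr fine.
apply: ae_eq_integral => //; try exact/measurable_realfun.measurable_EFinP.
by apply: filterS H => t H Dt; rewrite H.
Qed.

Lemma cont_bdd (R : realType) (a b : R) (f : R -> R) :
  {within `[a, b]%classic, continuous f} ->
  exists M, 0 < M /\ forall t, `[a, b]%classic t -> `|f t| <= M.
Proof.
move=> fc.
have [M [Mr HM]] := compact_bounded (continuous_compact fc (@segment_compact _ a b)).
exists (`|M| + 1); split; first by rewrite ltr_pwDr.
move=> t abt; apply: (HM (`|M| + 1)); last by exists t.
by rewrite (le_lt_trans (ler_norm M)) // ltrDl.
Qed.

Theorem lemma3 (R : realType) (T alpha beta sigma u1 R0 : R) (N : nat)
    (uhat : R -> R) :
  0 < T -> 0 < alpha -> 0 < beta -> 0 < sigma -> 0 < u1 -> (0 < N)%N ->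
  optimal_control T alpha beta sigma u1 R0 N uhat ->
  exists eps : R, 0 < eps /\ eps <= T /\
    {ae (@lebesgue_measure R), forall t, t \in `]T - eps, T[ -> uhat t = 0}.
Proof.
move=> T0 a0 b0 s0 u10 N0 [[muh aeh] [xh [[xc xeq] opt]]].
set c := N%:R * sigma ^+ 2.
pose mu := @lebesgue_measure R.
pose uc := fun t => Num.min (Num.max (uhat t) 0) u1.
have uc0 : forall t, 0 <= uc t.
  by move=> t; rewrite /uc le_min le_max lexx orbT (ltW u10).
have ucu : forall t, uc t <= u1.
  by move=> t; rewrite /uc ge_min lexx orbT.
have m0T : measurable `[0, T]%classic by exact: measurable_itv.
have f0T := @itv_fin R 0 T true false.
have muc : measurable_fun `[0, T]%classic uc.
  apply: measurable_realfun.measurable_minr; last exact: measurable_cst.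
  by apply: measurable_realfun.measurable_maxr; [exact: muh|exact: measurable_cst].
have aeF : Filter (nbhs (almost_everywhere (@lebesgue_measure R))).
  exact: (@ae_filter_ringOfSetsType _ _ R (@lebesgue_measure R)).
have ucae : {ae mu, forall t, `[0, T]%classic t -> uhat t = uc t}.
  apply: filterS aeh => t H /H /andP[h1 h2].
  by rewrite /uc (max_idPl h1) (min_idPl h2).
have mxh : measurable_fun `[0, T]%classic xh.
  exact: measurable_realfun.subspace_continuous_measurable_fun.
have [M [M0 HM]] := @cont_bdd R 0 T xh xc.
have gxh : good `[0, T]%classic xh by split => //; exists M.
have guc : good `[0, T]%classic uc.
  by split => //; exists u1 => t _; rewrite ger0_norm.
have gint : forall f (D : set R), measurable D -> D `<=` `[0, T]%classic ->
    good `[0, T]%classic f -> mu.-integrable D (EFin \o f).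
  by move=> f D mD DA gf; exact: (@good_int R _ D f m0T f0T mD DA gf).
have sub0T : forall a b : R, 0 <= a -> b <= T -> forall b0 b1,
    [set` Interval (BSide b0 a) (BSide b1 b)] `<=` `[0, T]%classic.
  move=> a b a0' bT b0' b1' x /=; rewrite !in_itv /= => /andP[h1 h2].
  apply/andP; split.
    by apply: le_trans a0' _; case: b0' h1 => /= h1; rewrite ?(ltW h1).
  by apply: le_trans bT; case: b1' h2 => /= h2; rewrite ?(ltW h2).
have xeq' : forall t, 0 <= t <= T ->
    xh t = R0 + \int[mu]_(r in `[0, t]) (- uc r * xh r + c).
  move=> t /andP[t0 tT]; rewrite xeq ?t0 ?tT //; congr (_ + _).
  have sub := sub0T 0 t (lexx 0) tT true false.
  apply: Rint_ae; first exact: measurable_itv.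
  - apply: measurable_realfun.measurable_funD; last exact: measurable_cst.
    apply: measurable_realfun.measurable_funM.
      apply: measurable_realfun.measurable_funN.
      exact: (measurable_funS m0T sub muh).
    exact: (measurable_funS m0T sub mxh).
  - apply: measurable_realfun.measurable_funD; last exact: measurable_cst.
    apply: measurable_realfun.measurable_funM.
      apply: measurable_realfun.measurable_funN.
      exact: (measurable_funS m0T sub muc).
    exact: (measurable_funS m0T sub mxh).
  by apply: filterS ucae => r H /sub /H ->.
have costh : cost T alpha beta uhat xh =
    \int[mu]_(r in `[0, T]) (alpha * xh r + beta * uc r).
  rewrite /cost; apply: Rint_ae => //.
  - apply: measurable_realfun.measurable_funD.
      by apply: measurable_realfun.measurable_funM => //; exact: measurable_cst.
    by apply: measurable_realfun.measurable_funM => //; exact: measurable_cst.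
  - apply: measurable_realfun.measurable_funD.
      by apply: measurable_realfun.measurable_funM => //; exact: measurable_cst.
    by apply: measurable_realfun.measurable_funM => //; exact: measurable_cst.
  by apply: filterS ucae => r H /H ->.
pose eps := Num.min T (beta / (2 * alpha * M)).
have e0 : 0 < eps.
  by rewrite /eps lt_min T0 /= divr_gt0 // !mulr_gt0.
have eT : eps <= T by rewrite /eps ge_min lexx.
have eb : alpha * M * eps <= beta / 2.
  have h : eps <= beta / (2 * alpha * M) by rewrite /eps ge_min lexx orbT.
  apply: le_trans (ler_wpM2l (ltW (mulr_gt0 a0 M0)) h) _.
  rewrite le_eqVlt; apply/orP; left; apply/eqP; field.
  by rewrite (lt0r_neq0 a0) (lt0r_neq0 M0).
pose s := T - eps.
have s0' : 0 <= s by rewrite /s subr_ge0.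
have sT : s < T by rewrite /s ltrBlDr ltrDl.
pose u' := fun t => if t <= s then uc t else 0.
pose x' := fun t => xh (Num.min t s) + c * Num.max (t - s) 0.
have x'L : forall t, t <= s -> x' t = xh t.
  move=> t ts; rewrite /x' (min_idPl ts) (max_idPr _) ?mulr0 ?addr0 //.
  by rewrite subr_le0.
have x'R : forall t, s <= t -> x' t = xh s + c * (t - s).
  move=> t st; rewrite /x' (min_idPr st) (max_idPl _) //.
  by rewrite subr_ge0.
have x'c : {within `[0, T]%classic, continuous x'}.
  have -> : `[0, T]%classic = `[0, s]%classic `|` `[s, T]%classic.
    apply/seteqP; split => t /=; rewrite !in_itv /=.
      move=> /andP[t0 tT]; case: (leP t s) => ts; [left|right].
        by rewrite t0.
      by rewrite (ltW ts) tT.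
    case=> /andP[h1 h2]; apply/andP; split => //.
    - exact: le_trans h2 (ltW sT).
    - exact: le_trans s0' h1.
  apply: withinU_continuous; [exact: itv_closed|exact: itv_closed| |].
  - apply: (@subspace_eq_continuous _ _ _ xh).
      by move=> t; rewrite inE /= in_itv /= => /andP[_ ts]; exact: esym (x'L t ts).
    apply: continuous_subspaceW xc => t /=; rewrite !in_itv /= => /andP[h1 h2].
    by rewrite h1 (le_trans h2 (ltW sT)).
  - apply: (@subspace_eq_continuous _ _ _ (fun t => xh s + c * (t - s))).
      by move=> t; rewrite inE /= in_itv /= => /andP[st _]; exact: esym (x'R t st).
    apply: continuous_subspaceT => t.
    apply: cvgD; first exact: cvg_cst.
    apply: cvgM; first exact: cvg_cst.
    apply: cvgB; [exact: cvg_id|exact: cvg_cst].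
have mx' : measurable_fun `[0, T]%classic x'.
  exact: measurable_realfun.subspace_continuous_measurable_fun.
have mu' : measurable_fun `[0, T]%classic u'.
  apply: measurable_fun_if => //.
  - exact: (measurable_realfun.measurable_fun_ler (@measurable_id _ _ _) (measurable_cst s)).
  - exact: (measurable_funS m0T (@subIsetl _ _ _) muc).
have u'0 : forall t, 0 <= u' t by move=> t; rewrite /u'; case: ifP.
have u'u : forall t, u' t <= u1 by move=> t; rewrite /u'; case: ifP => // _; exact: ltW.
have [M' [M'0 HM']] := @cont_bdd R 0 T x' x'c.
have gx' : good `[0, T]%classic x' by split => //; exists M'.
have gu' : good `[0, T]%classic u'.
  by split => //; exists u1 => t _; rewrite ger0_norm.
have adm' : admissible T u1 u'.
  by split => //; apply: aeW => t _; rewrite u'0 u'u.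
have gg' : good `[0, T]%classic (fun r => - u' r * x' r + c).
  apply: goodD => //; last exact: goodC.
  by apply: goodM => //; exact: goodN.
have ggh : good `[0, T]%classic (fun r => - uc r * xh r + c).
  apply: goodD => //; last exact: goodC.
  by apply: goodM => //; exact: goodN.
have st' : is_state T R0 N sigma u' x'.
  split => // t /andP[t0 tT]; case: (leP t s) => ts.
    rewrite x'L // xeq' ?t0 ?tT //; congr (_ + _).
    apply: eq_Rintegral => r; rewrite inE /= in_itv /= => /andP[_ rt].
    have rs := le_trans rt ts.
    by rewrite /u' rs x'L.
  rewrite x'R ?(ltW ts) //.
  have ig : mu.-integrable `[0, t]%classic
      (EFin \o (fun r => - u' r * x' r + c)).
    apply: gint; [exact: measurable_itv|exact: sub0T|exact: gg'].
  have h1 := Rintegral_itvB ig (a:=BLeft 0) (b:=BRight t) (x:=s).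
  rewrite !bnd_simp in h1.
  have {h1} h1 := h1 s0' (ltW ts).
  have h2 : \int[mu]_(r in `[0, s]) (- u' r * x' r + c) = xh s - R0.
    rewrite (xeq' s) ?s0' ?(ltW sT) // addrC addKr.
    apply: eq_Rintegral => r; rewrite inE /= in_itv /= => /andP[_ rs].
    by rewrite /u' rs x'L.
  have h3 : \int[mu]_(r in `]s, t]) (- u' r * x' r + c) = c * (t - s).
    rewrite (@eq_Rintegral _ _ _ _ _ (fun=> c)); last first.
      move=> r; rewrite inE /= in_itv /= => /andP[sr _].
      by rewrite /u' leNgt sr /= oppr0 mul0r add0r.
    by rewrite Rintegral_cst ?itv_len //; exact: measurable_itv.
  move: h1 h2 h3.
  set I1 := Rintegral _ _ _; set I2 := Rintegral _ _ _; set I3 := Rintegral _ _ _.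
  move=> h1 h2 h3; rewrite -h3 -h1 h2; ring.
have optc := opt u' x' adm' st'.
have gfh : good `[0, T]%classic (fun r => alpha * xh r + beta * uc r).
  by apply: goodD => //; apply: goodM => //; exact: goodC.
have gf' : good `[0, T]%classic (fun r => alpha * x' r + beta * u' r).
  by apply: goodD => //; apply: goodM => //; exact: goodC.
have msT : measurable `]s, T]%classic by exact: measurable_itv.
have subsT : `]s, T]%classic `<=` `[0, T]%classic by exact: sub0T.
have splitT : forall f, good `[0, T]%classic f ->
    \int[mu]_(r in `[0, T]) f r =
    \int[mu]_(r in `[0, s]) f r + \int[mu]_(r in `]s, T]) f r.
  move=> f gf.
  have ig : mu.-integrable `[0, T]%classic (EFin \o f).
    apply: gint; [exact: measurable_itv|exact: sub0T|exact: gf].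
  have := Rintegral_itvB ig (a:=BLeft 0) (b:=BRight T) (x:=s).
  rewrite !bnd_simp => /(_ s0' (ltW sT)) <-; ring.
rewrite costh /cost (splitT _ gfh) (splitT _ gf') in optc.
have e1 : \int[mu]_(r in `[0, s]) (alpha * x' r + beta * u' r) =
          \int[mu]_(r in `[0, s]) (alpha * xh r + beta * uc r).
  apply: eq_Rintegral => r; rewrite inE /= in_itv /= => /andP[_ rs].
  by rewrite /u' rs x'L.
rewrite e1 lerD2l in optc.
pose U := \int[mu]_(r in `]s, T]) uc r.
have U0 : 0 <= U by apply: Rintegral_ge0.
have iuc : forall D, measurable D -> D `<=` `]s, T]%classic ->
    mu.-integrable D (EFin \o uc).
  move=> D mD DsT; apply: gint => //; exact: subset_trans DsT subsT.
have key : forall t, `]s, T]%classic t -> x' t <= xh t + M * U.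
  move=> t /=; rewrite in_itv /= => /andP[st tT].
  have t0 : 0 <= t by exact: le_trans s0' (ltW st).
  have ig : mu.-integrable `[0, t]%classic
      (EFin \o (fun r => - uc r * xh r + c)).
    apply: gint; [exact: measurable_itv|exact: sub0T|exact: ggh].
  have h1 := Rintegral_itvB ig (a:=BLeft 0) (b:=BRight t) (x:=s).
  rewrite !bnd_simp in h1.
  have {h1} h1 := h1 s0' (ltW st).
  have ht : \int[mu]_(r in `[0, t]) (- uc r * xh r + c) = xh t - R0.
    rewrite (xeq' t) ?t0 ?tT //; ring.
  have hs : \int[mu]_(r in `[0, s]) (- uc r * xh r + c) = xh s - R0.
    rewrite (xeq' s) ?s0' ?(ltW sT) //; ring.
  rewrite ht hs in h1.
  have mst : measurable `]s, t]%classic by exact: measurable_itv.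
  have subst : `]s, t]%classic `<=` `]s, T]%classic.
    by move=> r /=; rewrite !in_itv /= => /andP[-> rt]; rewrite (le_trans rt tT).
  have substT : `]s, t]%classic `<=` `[0, T]%classic by exact: sub0T.
  rewrite RintegralD // in h1; last 2 first.
  - apply: gint => //; apply: goodM => //; exact: goodN.
  - by apply: gint => //; exact: goodC.
  rewrite Rintegral_cst // itv_len // in h1.
  have h2 : - (M * \int[mu]_(r in `]s, t]) uc r) <=
            \int[mu]_(r in `]s, t]) (- uc r * xh r).
    rewrite -mulNr -RintegralZl //; last exact: iuc.
    apply: le_Rintegral => //.
    - by apply: gint => //; apply: goodM => //; exact: goodC.
    - by apply: gint => //; apply: goodM => //; exact: goodN.
    - move=> r /substT rT; rewrite !mulNr lerN2 [M * _]mulrC.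
      apply: ler_wpM2l; first exact: uc0.
      exact: le_trans (ler_norm _) (HM r rT).
  have h3 : \int[mu]_(r in `]s, t]) uc r <= U.
    have ig2 : mu.-integrable `]s, T]%classic (EFin \o uc) by exact: iuc.
    have h4 := Rintegral_itvB ig2 (a:=BRight s) (b:=BRight T) (x:=t).
    rewrite !bnd_simp in h4.
    have {h4} h4 := h4 (ltW st) tT.
    have : 0 <= \int[mu]_(r in `]t, T]) uc r by apply: Rintegral_ge0.
    rewrite -h4 subr_ge0 => //.
  rewrite x'R ?(ltW st) //.
  have h5 : M * \int[mu]_(r in `]s, t]) uc r <= M * U.
    by apply: ler_wpM2l => //; exact: ltW.
  move: h1 h2 h5.
  set I1 := Rintegral _ _ _; set I2 := Rintegral _ _ _.
  move=> h1 h2 h5; lra.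
have gxa : good `[0, T]%classic (fun r => alpha * xh r).
  by apply: goodM => //; exact: goodC.
have gua : good `[0, T]%classic (fun r => beta * uc r).
  by apply: goodM => //; exact: goodC.
have hle : \int[mu]_(r in `]s, T]) (alpha * x' r + beta * u' r) <=
           \int[mu]_(r in `]s, T]) (alpha * xh r + alpha * M * U).
  apply: le_Rintegral => //.
  - exact: gint.
  - by apply: gint => //; apply: goodD => //; exact: goodC.
  - move=> r sr; have := key r sr.
    move: sr => /=; rewrite in_itv /= => /andP[sr _].
    rewrite /u' (leNgt r s) sr /= mulr0 addr0 -mulrA -mulrDr => h.
    by apply: ler_wpM2l => //; exact: ltW.
have hR : \int[mu]_(r in `]s, T]) (alpha * xh r + alpha * M * U) =
          \int[mu]_(r in `]s, T]) (alpha * xh r) + alpha * M * U * eps.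
  rewrite RintegralD //; [|exact: gint|by apply: gint => //; exact: goodC].
  rewrite Rintegral_cst // itv_len //; congr (_ + _ * _); rewrite /s; ring.
have hL : \int[mu]_(r in `]s, T]) (alpha * xh r + beta * uc r) =
          \int[mu]_(r in `]s, T]) (alpha * xh r) + beta * U.
  rewrite RintegralD //; [|exact: gint|exact: gint].
  congr (_ + _); rewrite RintegralZl //; exact: iuc.
have ineq : beta * U <= alpha * M * U * eps.
  have := le_trans optc hle; rewrite hR hL lerD2l => //.
have U0' : U = 0.
  apply/eqP; rewrite eq_le U0 andbT.
  have : alpha * M * U * eps <= beta / 2 * U.
    by rewrite mulrAC; apply: ler_wpM2r.
  move: ineq; set a := alpha * M * U * eps => h1 h2; nra.
have iU : mu.-integrable `]s, T]%classic (EFin \o uc).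
  exact: iuc.
have hint : (\int[mu]_(x in `]s, T]%classic) `|(EFin \o uc) x|)%E = 0%E.
  transitivity (\int[mu]_(x in `]s, T]%classic) (EFin \o uc) x)%E.
    by apply: eq_integral => x _; rewrite /= ger0_norm.
  have fin : (\int[mu]_(x in `]s, T]%classic) (EFin \o uc) x)%E \is a fin_num.
    by apply: integrable_fin_num => //; exact: measurable_itv.
  rewrite -(fineK fin).
  by rewrite -/(Rintegral mu `]s, T]%classic uc) -/U U0'.
have aeU : ae_eq mu `]s, T]%classic (EFin \o uc) (cst 0%E).
  apply/(ae_eq_integral_abs mu msT); last exact: hint.
  apply/measurable_realfun.measurable_EFinP.
  exact: (measurable_funS m0T subsT muc).
exists eps; split => //; split => //.
apply: (filterS2 _ _ ucae aeU) => t h1 h2.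
rewrite in_itv /= => /andP[st tT].
rewrite h1; last by rewrite /= in_itv /= (le_trans s0' (ltW st)) (ltW tT).
have := h2; rewrite /= in_itv /= st (ltW tT) => /(_ isT) [].
by [].
Qed.
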